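(* Let $l\ge2$ be an integer and $r_1,\dots,r_{2l}\ge0$. Then $$(r_1+r_2)\Big(\prod_{j=2}^{l-1}(r_j+r_{j+1})\Big)(r_l+r_{l+1})\cdot(r_1+r_{l+2})\Big(\prod_{j=l+2}^{2l-1}(r_j+r_{j+1})\Big)(r_{2l}+r_{l+1})\ \ge\ \Big(\max_{1\le i\le 2l}r_i\Big)^2\Big(\prod_{j=1}^{2l}r_j\Big)'',$$ where $\big(\prod_{j=1}^{2l}r_j\big)''$ denotes the product of the $r_j$ with one maximal and one minimal factor removed; i.e. if $r_{i_1}\ge r_{i_2}\ge\dots\ge r_{i_{2l}}$ is a non-increasing rearrangement, the right-hand side is $r_{i_1}^2\prod_{j=2}^{2l-1}r_{i_j}$.
   Context: Empty products equal $1$. *)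

(* Defs.v *)
From HB Require Import structures.
From mathcomp Require Import all_boot all_order all_algebra.
Set Implicit Arguments. Unset Strict Implicit. Unset Printing Implicit Defensive.
Import Order.TTheory GRing.Theory Num.Theory.
Local Open Scope ring_scope.

Definition rseq (R : realDomainType) (r : nat -> R) (n : nat) : seq R :=
  [seq r i | i <- iota 1 n].

Definition rmax (R : realDomainType) (r : nat -> R) (n : nat) : R :=
  \big[Num.max/r 1%N]_(1 <= i < n.+1) r i.

Definition prod_pp (R : realDomainType) (r : nat -> R) (n : nat) : R :=
  let t := sort (fun x y : R => y <= x) (rseq r n) in
  \prod_(1 <= j < n.-1) t`_j.

(* Main.v *)
Require Import Defs.
From HB Require Import structures.
From mathcomp Require Import all_boot all_order all_algebra.
From mathcomp Require Import zify ring.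
Import Order.TTheory GRing.Theory Num.Theory.
Local Open Scope ring_scope.

Lemma perm_rem' (T : eqType) (x : T) (s1 s2 : seq T) :
  perm_eq s1 s2 -> perm_eq (rem x s1) (rem x s2).
Proof.
move=> P; have [xs1|xns1] := boolP (x \in s1).
  have xs2 : x \in s2 by rewrite -(perm_mem P).
  rewrite -(perm_cons x); apply: perm_trans (perm_to_rem xs2).
  by apply: perm_trans P; rewrite perm_sym perm_to_rem.
have xns2 : x \notin s2 by rewrite -(perm_mem P).
by rewrite !rem_id.
Qed.

Section Cyc.
Variable R : realDomainType.
Variable r : nat -> R.

Fixpoint ppv (v : nat) (q : seq nat) : R :=
  if q is w :: q' then (r v + r w) * ppv w q' else 1.

Lemma ppv_cat v q1 q2 : ppv v (q1 ++ q2) = ppv v q1 * ppv (last v q1) q2.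
Proof. elim: q1 v => [|w q1 IH] v /=; first by rewrite mul1r. by rewrite IH mulrA. Qed.

Lemma ppv_rev v s w : ppv v (rcons s w) = ppv w (rcons (rev s) v).
Proof.
elim: s v => [|x s IH] v /=; first by rewrite addrC.
rewrite IH rev_cons -!cats1 -catA !ppv_cat /=.
ring.
Qed.

Lemma ppv_iota m k : ppv m (iota m.+1 k) = \prod_(m <= j < m + k) (r j + r j.+1).
Proof.
elim: k m => [|k IH] m /=; first by rewrite addn0 big_geq.
by rewrite IH [RHS]big_ltn ?addSn ?addnS // ltnS leq_addr.
Qed.

Lemma last_iota m k : last m (iota m.+1 k) = (m + k)%N.
Proof. elim: k m => [|k IH] m /=; first by rewrite addn0. by rewrite IH addSnnS. Qed.

Lemma ppv_ge0 v q : (forall i, i \in v :: q -> 0 <= r i) -> 0 <= ppv v q.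
Proof.
elim: q v => [|w q IH] v H /=; first by [].
apply: mulr_ge0; first by apply: addr_ge0; apply: H; rewrite !inE eqxx ?orbT.
by apply: IH => i Hi; apply: H; rewrite inE Hi orbT.
Qed.

Lemma prod_ge0 (q : seq nat) : (forall i, i \in q -> 0 <= r i) -> 0 <= \prod_(i <- q) r i.
Proof. by move=> H; rewrite big_seq; apply: prodr_ge0. Qed.

Lemma rem_ge0 b (q : seq nat) : (forall i, i \in q -> 0 <= r i) -> 0 <= \prod_(i <- rem b q) r i.
Proof. by move=> H; apply: prod_ge0 => i /mem_rem; apply: H. Qed.

Lemma drop_first v q : (forall i, i \in v :: q -> 0 <= r i) ->
  \prod_(i <- q) r i <= ppv v q.
Proof.
elim: q v => [|w q IH] v H /=; first by rewrite big_nil.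
have Hv : 0 <= r v by apply: H; rewrite inE eqxx.
have Hw : 0 <= r w by apply: H; rewrite !inE eqxx orbT.
rewrite big_cons; apply: ler_pM => //.
  by apply: prod_ge0 => i Hi; apply: H; rewrite !inE Hi !orbT.
  by rewrite lerDr.
by apply: IH => i Hi; apply: H; rewrite inE Hi orbT.
Qed.

Lemma path_lem v q b : (forall i, i \in v :: q -> 0 <= r i) -> b \in v :: q ->
  \prod_(i <- rem b (v :: q)) r i <= ppv v q.
Proof.
elim: q v => [|w q IH] v H Hb.
  by move: Hb; rewrite inE => /eqP ->; rewrite /= eqxx big_nil.
have [Evb|Nvb] := eqVneq v b; first by subst; rewrite /= eqxx; apply: drop_first.
have Hv : 0 <= r v by apply: H; rewrite inE eqxx.
have Hw : 0 <= r w by apply: H; rewrite !inE eqxx orbT.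
have H' : forall i, i \in w :: q -> 0 <= r i by move=> i Hi; apply: H; rewrite inE Hi orbT.
have Hb' : b \in w :: q by move: Hb; rewrite inE eq_sym (negPf Nvb).
have -> : rem b [:: v, w & q] = v :: rem b (w :: q) by rewrite /= (negPf Nvb).
rewrite big_cons [ppv _ (w :: q)]/=; apply: ler_pM => //.
  exact: rem_ge0.
  by rewrite lerDl.
by apply: IH.
Qed.

Lemma rot_lem v q a : a \in v :: q ->
  exists p, perm_eq (v :: q) (a :: p) /\ ppv v (rcons q v) = ppv a (rcons p a).
Proof.
rewrite inE; case/orP => [/eqP ->|]; first by exists q.
case/splitPr => q1 q2; exists (q2 ++ v :: q1); split.
  have -> : v :: q1 ++ a :: q2 = (v :: q1) ++ (a :: q2) by [].
  rewrite perm_catC; exact: perm_refl.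
by rewrite !rcons_cat !rcons_cons -!cat_rcons !ppv_cat !last_rcons mulrC.
Qed.

Lemma cyc_lem v q a b : (forall i, i \in v :: q -> 0 <= r i) -> a \in v :: q ->
  b \in rem a (v :: q) ->
  r a ^+ 2 * \prod_(i <- rem b (rem a (v :: q))) r i <= ppv v (rcons q v).
Proof.
move=> H Ha Hb; have [p [Pp ->]] := @rot_lem _ _ _ Ha.
have Pr : perm_eq (rem a (v :: q)) p.
  by have := perm_rem' _ a _ _ Pp; rewrite /= eqxx.
rewrite (perm_big _ (perm_rem' _ b _ _ Pr)).
have Hp : forall i, i \in a :: p -> 0 <= r i by move=> i; rewrite -(perm_mem Pp); apply: H.
have Hbp : b \in p by rewrite -(perm_mem Pr).
case: p Pp Pr Hp Hbp => [|p0 p'] Pp Pr Hp Hbp //.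
rewrite rcons_cons /= -cats1 ppv_cat /= mulr1.
have Hp' : forall i, i \in p0 :: p' -> 0 <= r i by move=> i Hi; apply: Hp; rewrite inE Hi orbT.
have Ha0 : 0 <= r a by apply: Hp; rewrite inE eqxx.
have Hp0 : 0 <= r p0 by apply: Hp'; rewrite inE eqxx.
have HL : 0 <= r (last p0 p') by apply: Hp'; apply: mem_last.
have X := @path_lem _ _ _ Hp' Hbp.
have X0 : 0 <= \prod_(i <- rem b (p0 :: p')) r i by apply: prod_ge0 => i /mem_rem; apply: Hp'.
have -> : (r a + r p0) * (ppv p0 p' * (r (last p0 p') + r a))
   = ((r a + r p0) * (r (last p0 p') + r a)) * ppv p0 p' by ring.
rewrite expr2; apply: ler_pM => //; first by apply: mulr_ge0.
apply: ler_pM => //; by rewrite ?lerDl ?lerDr.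
Qed.

End Cyc.
Arguments ppv {R} r v q.

Theorem lemma3p5 (R : realDomainType) (l : nat) (r : nat -> R) :
  (2 <= l)%N ->
  (forall i, (1 <= i <= 2 * l)%N -> 0 <= r i) ->
  (r 1%N + r 2%N) * (\prod_(2 <= j < l) (r j + r j.+1)) * (r l + r l.+1)
    * (r 1%N + r (l + 2)%N) * (\prod_(l + 2 <= j < 2 * l) (r j + r j.+1))
    * (r (2 * l)%N + r l.+1)
  >= rmax r (2 * l) ^+ 2 * prod_pp r (2 * l).
Proof.
case: l => [|[|k]] // _ Hr.
set q := iota 2 k.+2 ++ rev (iota (k.+2 + 2) k.+1).
have HL : ppv r 1 (rcons q 1%N) =
  (r 1%N + r 2%N) * (\prod_(2 <= j < k.+2) (r j + r j.+1)) * (r k.+2 + r k.+3)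
    * (r 1%N + r (k.+2 + 2)%N) * (\prod_(k.+2 + 2 <= j < 2 * k.+2) (r j + r j.+1))
    * (r (2 * k.+2)%N + r k.+3).
  rewrite /q rcons_cat ppv_cat ppv_iota last_iota ppv_rev revK.
  rewrite [iota (k.+2 + 2) k.+1]/= rcons_cons /= -cats1 ppv_cat /= ppv_iota last_iota.
  rewrite mulr1 add1n big_ltn // big_nat_recr //=.
  have -> : (k.+2 + 2 + k = 2 * k.+2)%N by lia.
  by rewrite !mulrA.
rewrite -HL.
set n := (2 * k.+2)%N.
have Pc : perm_eq (1%N :: q) (iota 1 n).
  have -> : n = (k.+3 + k.+1)%N by rewrite /n; lia.
  rewrite iotaD /q -cat_cons perm_cat2l.
  have -> : (1 + k.+3 = k.+2 + 2)%N by lia.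
  by rewrite perm_rev.
have Hc : forall i, i \in 1%N :: q -> 0 <= r i.
  by move=> i; rewrite (perm_mem Pc) mem_iota => /andP [H1 H2]; apply: Hr; rewrite /n in H2; lia.
rewrite /prod_pp; cbv zeta.
set t := sort _ _.
have Pt : perm_eq t (map r (1%N :: q)).
  rewrite perm_sort /rseq; apply: perm_map; by rewrite perm_sym.
have St : sorted (fun x y : R => y <= x) t.
  apply: sort_sorted => x y; exact: le_total.
have Ht : size t = n by rewrite (perm_size Pt) size_map (perm_size Pc) size_iota.
case Et: t Pt St Ht => [|x t1] Pt St Ht //.
case/lastP: t1 Et Pt St Ht => [|w y] Et Pt St Ht; first by rewrite /n in Ht.
have Hx : forall i, (1 <= i <= n)%N -> r i <= x.
  move=> i Hi.
  have : r i \in x :: rcons w y.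
    by rewrite (perm_mem Pt); apply: map_f; rewrite (perm_mem Pc) mem_iota; lia.
  rewrite inE => /orP [/eqP -> //|Hin].
  have tr : transitive (fun x y : R => y <= x) by move=> b a c h1 h2; exact: le_trans h2 h1.
  have := order_path_min tr St.
  by move/allP => /(_ _ Hin).
have Hrm : 0 <= rmax r n /\ rmax r n <= x.
  rewrite /rmax big_seq; apply: (big_ind (fun z => 0 <= z /\ z <= x)).
  - by split; [apply: Hr | apply: Hx].
  - move=> a b [a0 ax] [b0 bx]; split; first by rewrite le_max a0.
    by rewrite ge_max ax bx.
  - move=> i; rewrite mem_index_iota => Hi; split; [apply: Hr | apply: Hx]; lia.
have -> : \prod_(1 <= j < n.-1) (x :: rcons w y)`_j = \prod_(i <- w) i.
  have Hw : size w = n.-2 by move: Ht; rewrite /= size_rcons /n; lia.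
  rewrite big_add1 [RHS](big_nth 0) Hw.
  by apply: eq_big_nat => i /andP [_ Hi] /=; rewrite nth_rcons Hw Hi.
have P2 : perm_eq (map r (1%N :: q)) [:: x, y & w].
  by rewrite perm_sym; apply: perm_trans Pt; rewrite perm_cons perm_sym perm_rcons.
have xin : x \in map r (1%N :: q) by rewrite (perm_mem P2) inE eqxx.
case/mapP: xin => a Ha Exa.
have P3 : perm_eq (map r (rem a (1%N :: q))) (y :: w).
  rewrite -(perm_cons x); apply: perm_trans P2.
  by rewrite Exa -map_cons perm_map // perm_sym perm_to_rem.
have yin : y \in map r (rem a (1%N :: q)) by rewrite (perm_mem P3) inE eqxx.
case/mapP: yin => b Hb Eyb.
have P4 : perm_eq (map r (rem b (rem a (1%N :: q)))) w.
  rewrite -(perm_cons y); apply: perm_trans P3.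
  by rewrite Eyb -map_cons perm_map // perm_sym perm_to_rem.
have -> : \prod_(i <- w) i = \prod_(i <- rem b (rem a (1%N :: q))) r i.
  by rewrite -(perm_big _ P4) big_map.
apply: le_trans (@cyc_lem _ r _ _ _ _ Hc Ha Hb).
have H0 : 0 <= \prod_(i <- rem b (rem a (1%N :: q))) r i.
  by apply: prod_ge0 => i /mem_rem /mem_rem; apply: Hc.
apply: ler_wpM2r => //; rewrite -Exa.
case: Hrm => h0 h1; apply: lerXn2r => //; rewrite ?nnegrE //; exact: le_trans h1.
Qed.
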